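(* Let $L$ be a finite lattice, let $b\in L$, and let $A\subseteq L$ be a $b$-meet antichain. Let $L_A^b=\{\bigwedge A'\wedge b : A'\subseteq A\}$, regarded as a subposet of $L$ (it is a lattice), and let $\mu_A^b$ be the Möbius function of the lattice $L_A^b$. Then for every $\varphi\in R(L)$, $$\nabla_A^b\varphi=\sum_{x\in L_A^b}\varphi(x)\,\mu_A^b(x,b).$$
   Context: $L$ is a finite lattice with order $\le$, meet $\wedge$, minimum $\hat0$ and maximum $\hat1$; $R(L)$ is the space of real-valued functions on $L$. For $A'\subseteq L$, $\bigwedge A'$ is the meet of the elements of $A'$, with $\bigwedge\emptyset=\hat1$. For a finite subset $A\subseteq L$ and $b\in L$, the successive difference functional is $\nabla_A^b\varphi=\sum_{A'\subseteq A}(-1)^{|A'|}\varphi(\bigwedge A'\wedge b)$; for nonempty $A=\{a_1,\dots,a_n\}$ this equals $\nabla_{a_1,\ldots,a_n}\varphi(b)$, where $\nabla_a\varphi(x)=\varphi(x)-\varphi(x\wedge a)$ and $\nabla_{a_1,\ldots,a_n}\varphi=\nabla_{a_n}(\nabla_{a_1,\ldots,a_{n-1}}\varphi)$. An $n$-element subset $A=\{a_1,\dots,a_n\}$ of $L$ is a $b$-meet antichain if $\{a_1\wedge b,\dots,a_n\wedge b\}$ is an $n$-element antichain (pairwise incomparable distinct elements); a singleton $\{a\}$ counts as a $b$-meet antichain only when $b\not\le a$. The Möbius function $\mu$ of a finite poset $P$ is defined by $\mu(x,x)=1$ and $\mu(x,y)=-\sum_{x\le z<y}\mu(x,z)$ for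 $x<y$. *)

(* Defs.v *)
From HB Require Import structures.
From mathcomp Require Import all_boot all_order all_algebra.
From mathcomp Require Export reals.
Set Implicit Arguments. Unset Strict Implicit. Unset Printing Implicit Defensive.
Import Order.TTheory GRing.Theory Num.Theory.
Local Open Scope ring_scope.

Section Defs.
Variables (d : Order.disp_t) (L : finTBLatticeType d) (R : realType).

Definition bigmeet (A' : {set L}) : L := \big[Order.meet/Order.top]_(a in A') a.

Definition nablaAb (A : {set L}) (b : L) (phi : L -> R) : R :=
  \sum_(A' in powerset A) (-1) ^+ #|A'| * phi (Order.meet (bigmeet A') b).

Definition meet_antichain (b : L) (A : {set L}) : Prop :=
  if #|A| == 1%N then forall a, a \in A -> ~~ (b <= a)%O
  else forall x y, x \in A -> y \in A -> x != y ->
         ~~ (Order.comparable (Order.meet x b) (Order.meet y b)).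

Definition LAb (A : {set L}) (b : L) : {set L} :=
  [set Order.meet (bigmeet A') b | A' in powerset A].

Fixpoint mobius_fuel (S : {set L}) (n : nat) (x y : L) : R :=
  if x == y then 1 else
  match n with
  | 0%N => 0
  | n'.+1 => if (x < y)%O then
               - \sum_(z in S | (x <= z)%O && (z < y)%O) mobius_fuel S n' x z
             else 0
  end.

Definition mobius (S : {set L}) (x y : L) : R := mobius_fuel S #|S| x y.

End Defs.

(* Main.v *)
Require Import Defs.
From mathcomp Require Import all_boot all_order all_algebra reals.
Local Open Scope ring_scope.
Import Order.TTheory GRing.Theory Num.Theory.

Section Helpers.
Variables (d : Order.disp_t) (L : finTBLatticeType d) (R : realType).

Lemma alt_sum (T : finType) (C : {set T}) :
  \sum_(B in powerset C) (-1) ^+ #|B| = (C == set0)%:R :> R.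
Proof.
case: (set_0Vmem C) => [->|[c cC]].
  by rewrite powerset0 big_set1 cards0 expr0 eqxx.
have -> : (C == set0) = false by apply/negbTE/set0Pn; exists c.
pose t := fun B : {set T} => if c \in B then B :\ c else c |: B.
have tt : involutive t.
  move=> B; rewrite /t; case: (boolP (c \in B)) => cB.
    by rewrite !inE eqxx /= setD1K.
  by rewrite setU11 setU1K.
set S := (X in X = _).
have HS : S = - S.
  rewrite {1}/S (reindex_inj (inv_inj tt)) /= -sumrN.
  apply: eq_big => B.
    rewrite !powersetE /t; case: (boolP (c \in B)) => cB.
      apply/idP/idP => /subsetP H; apply/subsetP => z zB.
        by case: (eqVneq z c) => [->//|zc]; apply: H; rewrite !inE zc.
      by apply: H; move: zB; rewrite !inE => /andP[].
    apply/idP/idP => /subsetP H; apply/subsetP => z zB.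
      by apply: H; rewrite !inE zB orbT.
    by move: zB; rewrite !inE => /orP[/eqP->//|]; apply: H.
  move=> _; rewrite /t; case: (boolP (c \in B)) => cB.
    by rewrite [in RHS](cardsD1 c B) cB add1n exprS mulN1r opprK.
  by rewrite cardsU1 cB add1n exprS mulN1r.
have : S *+ 2 == 0 by rewrite mulr2n {1}HS addNr.
by rewrite mulrn_eq0 /= => /eqP.
Qed.

Definition hgt (S : {set L}) (x y : L) := #|[set z in S | (x <= z)%O && (z < y)%O]|.

Lemma hgt_lt {S : {set L}} {x y z : L} : z \in S -> (x <= z)%O -> (z < y)%O -> (hgt S x z < hgt S x y)%N.
Proof.
move=> zS xz zy; apply: proper_card; apply/properP; split.
  apply/subsetP => w; rewrite !inE => /andP[-> /andP[-> wz]] /=.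
  exact: lt_trans wz zy.
by exists z; rewrite !inE ?zS ?xz ?zy ?ltxx ?andbF.
Qed.

Lemma mob_stable (S : {set L}) (x : L) : forall n m y, (hgt S x y <= n)%N -> (hgt S x y <= m)%N ->
  mobius_fuel R S n x y = mobius_fuel R S m x y.
Proof.
have h0 : forall k y, hgt S x y = 0%N -> mobius_fuel R S k x y = mobius_fuel R S 0 x y.
  move=> [|k] y h //=; case: (x == y) => //; case: ifP => // _.
  rewrite big_pred0 ?oppr0 // => z; apply/negbTE/negP => /andP[zS /andP[xz zy]].
  by have := hgt_lt (y:=y) zS xz zy; rewrite h.
elim=> [|n IH] m y hn hm.
  by rewrite h0 //; apply/eqP; rewrite -leqn0.
case: m hm => [|m] hm.
  by rewrite h0 //; apply/eqP; rewrite -leqn0.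
rewrite /=; case: (x == y) => //; case: ifP => // _; congr (- _).
apply: eq_bigr => z /andP[zS /andP[xz zy]].
have := hgt_lt (y:=y) zS xz zy => lt; apply: IH.
  by rewrite -ltnS; apply: leq_trans lt hn.
by rewrite -ltnS; apply: leq_trans lt hm.
Qed.

Lemma hgt_le (S : {set L}) x y : (hgt S x y <= #|S|)%N.
Proof. by apply: subset_leq_card; apply/subsetP => z; rewrite inE => /andP[]. Qed.

Lemma mobius_xx (S : {set L}) x : mobius R S x x = 1.
Proof. by rewrite /mobius; case: #|S| => [|k] /=; rewrite eqxx. Qed.

Lemma mobius_rec (S : {set L}) x y : (0 < #|S|)%N -> (x < y)%O ->
  mobius R S x y = - \sum_(z in S | (x <= z)%O && (z < y)%O) mobius R S x z.
Proof.
rewrite /mobius => Sp xy; have := hgt_le S x y.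
case: #|S| Sp => [//|n] _ hy /=.
rewrite (lt_eqF xy) xy; congr (- _); apply: eq_bigr => z /andP[zS /andP[xz zy]].
have := hgt_lt (y:=y) zS xz zy => lt.
have hz : (hgt S x z <= n)%N by rewrite -ltnS; apply: leq_trans lt hy.
by apply: (mob_stable _ _ n n.+1) => //; apply: leqW.
Qed.

Lemma mob_sum (S : {set L}) x w : (0 < #|S|)%N -> x \in S -> w \in S ->
  \sum_(z in S | (x <= z)%O && (z <= w)%O) mobius R S x z = (x == w)%:R.
Proof.
move=> Sp xS wS.
case: (eqVneq x w) => [<-|xw].
  rewrite (big_pred1 x); first exact: mobius_xx.
  move=> z /=; rewrite -eq_le eq_sym.
  by case: (eqVneq z x) => [->|] /=; rewrite ?xS ?andbF.
case: (boolP (x <= w)%O) => xlw; last first.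
  rewrite big_pred0 // => z; apply/negbTE/negP => /andP[_ /andP[xz zw]].
  by move: xlw; rewrite (le_trans xz zw).
rewrite (bigD1 w) /=; last by rewrite wS xlw lexx.
rewrite mobius_rec //; last by rewrite lt_neqAle xw.
rewrite addrC; apply/eqP; rewrite subr_eq0; apply/eqP; apply: eq_bigl => z.
by rewrite lt_neqAle -!andbA; congr (_ && (_ && _)); rewrite andbC.
Qed.

End Helpers.

Lemma noba {d} {L : finTBLatticeType d} {b : L} {A : {set L}} {a} :
  meet_antichain b A -> a \in A -> ~~ (b <= a)%O.
Proof.
rewrite /meet_antichain; case: ifP => [_ H aA|hc H aA]; first exact: H.
apply/negP => ba.
have : (A :\ a) != set0.
  rewrite -cards_eq0; apply/negP => /eqP c0.
  by move: hc; rewrite (cardsD1 a A) aA c0.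
case/set0Pn => a'; rewrite in_setD1 => /andP[a'a a'A].
have := H a a' aA a'A; rewrite eq_sym a'a => /(_ isT).
by rewrite (meet_idPr ba) ge_comparable // leIr.
Qed.

Theorem lemma2p2 (d : Order.disp_t) (L : finTBLatticeType d) (R : realType)
  (b : L) (A : {set L}) :
  meet_antichain b A ->
  forall phi : L -> R,
    nablaAb A b phi = \sum_(x in LAb A b) phi x * mobius R (LAb A b) x b.
Proof.
move=> anti phi.
set S := LAb A b.
pose m (A' : {set L}) := Order.meet (bigmeet A') b.
have memS : forall A', A' \in powerset A -> m A' \in S.
  by move=> A' HA'; apply: imset_f.
have leb : forall z, z \in S -> (z <= b)%O.
  by move=> z /imsetP[A' _ ->]; apply: leIr.
have bS : b \in S.
  apply/imsetP; exists set0; first by rewrite powersetE sub0set.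
  by rewrite /bigmeet big_set0 meet1x.
have Sp : (0 < #|S|)%N by apply/card_gt0P; exists b.
pose h x := \sum_(A' in powerset A | m A' == x) (-1) ^+ #|A'| : R.
have step1 : nablaAb A b phi = \sum_(x in S) phi x * h x.
  rewrite /nablaAb (partition_big m (mem S)) /=; last by move=> A'; apply: memS.
  apply: eq_bigr => x _; rewrite /h mulr_sumr; apply: eq_bigr => A' /andP[_ /eqP <-].
  by rewrite mulrC.
have keyA : forall y, y \in S -> ([set a in A | (y <= a)%O] == set0) = (y == b).
  move=> y yS; apply/idP/idP => [/eqP H|/eqP ->].
    case/imsetP: yS H => A' HA' -> H; case: (set_0Vmem A') => [->|[a aA']].
      by rewrite /bigmeet big_set0 meet1x.
    have : a \in [set a in A | (Order.meet (bigmeet A') b <= a)%O].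
      rewrite inE; move: HA'; rewrite powersetE => /subsetP -> //=.
      by apply: leIxl; apply: meets_inf.
    by rewrite H inE.
  apply/eqP/setP => a; rewrite !inE; apply/negbTE/negP => /andP[aA ba].
  by move: (noba anti aA); rewrite ba.
have key : forall y, y \in S -> \sum_(w in S | (y <= w)%O) h w = (y == b)%:R.
  move=> y yS.
  have -> : \sum_(w in S | (y <= w)%O) h w = \sum_(w in S | (y <= w)%O)
     \sum_(A' | (A' \in powerset A) && (y <= m A')%O && (m A' == w)) (-1) ^+ #|A'|.
    apply: eq_bigr => w /andP[_ yw]; rewrite /h; apply: eq_bigl => A'.
    case: (boolP (m A' == w)) => [/eqP ->|_]; last by rewrite !andbF.
    by rewrite !andbT (_ : (y <= w)%O = true) ?andbT.
  rewrite -(partition_big m (fun w => (w \in S) && (y <= w)%O)) /=; last first.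
    by move=> A' /andP[HA' ->]; rewrite memS.
  rewrite (eq_bigl (fun A' => A' \in powerset [set a in A | (y <= a)%O])); last first.
    move=> A'; rewrite !powersetE /m lexI leb // andbT.
    apply/idP/idP => [/andP[/subsetP sA /meetsP H]|/subsetP H].
      by apply/subsetP => a aA'; rewrite inE sA //= H.
    apply/andP; split; first by apply/subsetP => a /H; rewrite inE => /andP[].
    by apply/meetsP => a /H; rewrite inE => /andP[].
  by rewrite alt_sum keyA.
rewrite step1; apply: eq_bigr => x xS; congr (_ * _).
have conv := erefl (\sum_(z in S | (x <= z)%O) mobius R S x z * \sum_(w in S | (z <= w)%O) h w).
rewrite {1}(eq_bigr (fun z => mobius R S x z * (z == b)%:R)) in conv; last first.
  by move=> z /andP[zS _]; rewrite key.
rewrite (bigD1 b) /= in conv; last by rewrite bS leb.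
rewrite eqxx mulr1 big1 ?addr0 in conv; last first.
  by move=> z /andP[_ /negbTE ->]; rewrite mulr0.
rewrite conv.
under eq_bigr do rewrite mulr_sumr.
rewrite (exchange_big_dep (fun w => (w \in S) && (x <= w)%O)) /=; last first.
  by move=> z w /andP[_ xz] /andP[-> zw]; rewrite (le_trans xz zw).
rewrite (eq_bigr (fun w => h w * (x == w)%:R)); last first.
  move=> w /andP[wS xw]; rewrite -mulr_suml mulrC -(@mob_sum _ _ R S x w Sp xS wS).
  congr (_ * _); apply: eq_bigl => z. by rewrite wS /= andbA.
rewrite (bigD1 x) /=; last by rewrite xS lexx.
by rewrite eqxx mulr1 big1 ?addr0 // => w /andP[_ /negbTE]; rewrite eq_sym => ->; rewrite mulr0.
Qed.
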